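(* Let $n\geqslant 3$, let $\lambda\in\mathcal{D}_n$ have length $\ell\geqslant 3$, set $r=2\lfloor(\ell+1)/2\rfloor$ and $\lambda_j=0$ for $j>\ell$. Then $$\sum_{j=1}^{r-1}(-1)^{j-1}\,\partial_{\Box}\bigl(\widetilde{P}_{\lambda_j,\lambda_r}(X)\bigr)\cdot\partial_{\Box}\bigl(\widetilde{P}_{\lambda\smallsetminus\{\lambda_j,\lambda_r\}}(X)\bigr)=0$$ in $A[X]$, where $A=\mathbb{Z}[\tfrac12]$.
   Context: $X=(x_1,\ldots,x_n)$. $\mathcal{D}_n$ is the set of strict partitions with all parts $\leqslant n$. $\widetilde{P}$-polynomials: $\widetilde{P}_0(X)=1$, $\widetilde{P}_i(X)=e_i(X)/2$ for $i>0$ ($e_i$ elementary symmetric); for $i\geqslant j\geqslant 0$, $\widetilde{P}_{i,j}(X)=\widetilde{P}_i\widetilde{P}_j+2\sum_{k=1}^{j-1}(-1)^k\widetilde{P}_{i+k}\widetilde{P}_{j-k}+(-1)^j\widetilde{P}_{i+j}$ (so $\widetilde P_{i,0}=\widetilde P_i$); for a partition $\mu$ of length $m$, $\widetilde{P}_\mu(X)=\mathrm{Pfaffian}[\widetilde{P}_{\mu_i,\mu_j}(X)]_{1\leqslant i<j\leqslant 2\lfloor(m+1)/2\rfloor}$. For strict partitions, $\lambda\smallsetminus\mu$ is the partition whose parts are the parts of $\lambda$ that are not parts of $\mu$. The operator $\partial_\Box$ on $A[X]$ is $\partial_\Box(f)=(f-s_\Box f)/(x_1+x_2)$, where $s_\Box$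 sends $(x_1,x_2)\mapsto(-x_2,-x_1)$ and fixes $x_3,\ldots,x_n$. (For nonzero $\mu\in\mathcal{D}_{n-1}$, $\partial_\Box(\widetilde P_\mu(X))$ equals the type $D$ Schubert polynomial $\mathfrak{D}'_\mu(X)=\mathfrak{D}_{w_\mu s_\Box}(X)$ representing a Schubert class on $SO_{2n}/B$.) *)

(* Defs.v *)
From HB Require Import structures.
From mathcomp Require Import all_boot all_order all_algebra.
From mathcomp Require Import mpoly.
From Stdlib Require Import ClassicalEpsilon.
Set Implicit Arguments. Unset Strict Implicit. Unset Printing Implicit Defensive.
Import Order.TTheory GRing.Theory Num.Theory.
Local Open Scope ring_scope.

(* Coefficient ring: A = Z[1/2] is realized inside rat.
   Polynomials in X = (x_1,...,x_n) are {mpoly rat[n]}, with x_{i+1} = 'X_i. *)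
Notation poly n := {mpoly rat[n]}.

Definition Pt1 (n : nat) (i : nat) : poly n :=
  if i == 0%N then 1 else (2%:R^-1 : rat) *: mesym n rat i.

(* \widetilde P_{i,j}(X) (used for i >= j >= 0). *)
Definition Pt2 (n : nat) (i j : nat) : poly n :=
  Pt1 n i * Pt1 n j
  + 2%:R * (\sum_(1 <= k < j) (-1) ^+ k * Pt1 n (i + k) * Pt1 n (j - k))
  + (-1) ^+ j * Pt1 n (i + j).

(* Pfaffian of the skew matrix with upper entries a_{ij} = f s_i s_j (i<j),
   defined by the standard Laplace expansion along the first row:
   Pf(A) = sum_{j>=2} (-1)^j a_{1j} Pf(A with rows/cols 1,j removed),
   Pf(empty) = 1.  The fuel argument k is set to size s. *)
Fixpoint pf_aux (R : ringType) (f : nat -> nat -> R) (k : nat) (s : seq nat) : R :=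
  match k, s with
  | 0%N, _ => 1
  | k'.+1, [::] => 1
  | k'.+1, a :: t =>
      \sum_(j < size t)
        (-1) ^+ j * f a (nth 0%N t j) * pf_aux f k' (take j t ++ drop j.+1 t)
  end.

Definition pfaffian (R : ringType) (f : nat -> nat -> R) (s : seq nat) : R :=
  pf_aux f (size s) s.

Definition evenup (m : nat) : nat := (2 * ((m + 1) %/ 2))%N.

Definition pad (mu : seq nat) : seq nat := mu ++ nseq (evenup (size mu) - size mu) 0%N.

Definition Ptilde (n : nat) (mu : seq nat) : poly n := pfaffian (Pt2 n) (pad mu).

Definition strict_part_le (n : nat) (lam : seq nat) : bool :=
  sorted (fun a b => b < a)%N lam && all (fun a => (0 < a <= n)%N) lam.

Definition sbox_subst (n : nat) : n.-tuple (poly n) :=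
  [tuple (if val i == 0%N then - 'X_(insubd i 1%N)
          else if val i == 1%N then - 'X_(insubd i 0%N)
          else 'X_i) | i < n].

Definition sbox (n : nat) (f : poly n) : poly n := f \mPo sbox_subst n.

Definition x12 (n : nat) : poly n := \sum_(i : 'I_n | (val i < 2)%N) 'X_i.

(* partial_Box f = (f - s_Box f)/(x_1 + x_2): the (unique, the ring being a
   domain) polynomial g with (x_1+x_2) g = f - s_Box f. *)
Definition dbox (n : nat) (f : poly n) : poly n :=
  epsilon (inhabits 0) (fun g : poly n => x12 n * g = f - sbox f).

(* Main.v *)
Require Import Defs.
From HB Require Import structures.
From mathcomp Require Import all_boot all_order all_algebra.
From mathcomp Require Import mpoly.
From mathcomp Require Import ring zify.
From Stdlib Require Import Lia ClassicalEpsilon.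
Import GRing.Theory Num.Theory.
Local Open Scope ring_scope.

Definition rm (j : nat) (s : seq nat) := take j s ++ drop j.+1 s.

Lemma size_rm j s : (j < size s)%N -> size (rm j s) = (size s).-1.
Proof.
move=> hj; rewrite /rm size_cat size_take hj size_drop.
by case: (size s) hj => // m hj; rewrite subSS; lia.
Qed.

Lemma rm0 a s : rm 0 (a :: s) = s.
Proof. by rewrite /rm /= drop0. Qed.

Lemma rmS j a s : rm j.+1 (a :: s) = a :: rm j s.
Proof. by []. Qed.

Section Pf.
Variable R : comRingType.
Implicit Types f : nat -> nat -> R.

Lemma pf_aux_fuel2 f k1 k2 s : (size s <= k1)%N -> (size s <= k2)%N ->
  pf_aux f k1 s = pf_aux f k2 s.
Proof.
elim: k1 k2 s => [|k IH] [|k2] [|a t] //= hs hs2.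
apply: eq_bigr => j _; congr (_ * _).
have hj := ltn_ord j.
by apply: IH; rewrite size_rm //; lia.
Qed.

Lemma pf_aux_fuel f k s : (size s <= k)%N -> pf_aux f k s = pf_aux f (size s) s.
Proof. by move=> h; apply: pf_aux_fuel2. Qed.

Lemma pfE0 f : pfaffian f [::] = 1.
Proof. by []. Qed.

Lemma pfE f a u : pfaffian f (a :: u) =
  \sum_(0 <= j < size u) (-1) ^+ j * f a (nth 0%N u j) * pfaffian f (rm j u).
Proof.
rewrite /pfaffian /= big_mkord; apply: eq_bigr => j _.
have hj := ltn_ord j.
by rewrite pf_aux_fuel // size_rm //; lia.
Qed.

Lemma pf_rmorph (s : {rmorphism R -> R}) f u :
  s (pfaffian f u) = pfaffian (fun a b => s (f a b)) u.
Proof.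
move: {2}(size u) (leqnn (size u)) => N; elim: N u => [|N IH] [|a u] //= hN;
  rewrite ?rmorph1 // !pfE rmorph_sum; apply: eq_big_nat => j /andP [_ hj].
rewrite !rmorphM rmorph_sign IH //; rewrite size_rm //; lia.
Qed.

End Pf.

Arguments rm : simpl never.
Set Implicit Arguments. Unset Strict Implicit.

Section DL.
Variable R : comRingType.

Definition dsum (u : seq nat) (F : nat -> nat -> seq nat -> R) :=
  \sum_(0 <= k < size u) (-1) ^+ k * \sum_(0 <= m < (size u).-1)
      (-1) ^+ m * F (nth 0%N u k) (nth 0%N (rm k u) m) (rm m (rm k u)).

Lemma dsum_cons a b u F : dsum (a :: b :: u) F =
  \sum_(0 <= m < (size u).+1) (-1) ^+ m * F a (nth 0%N (b :: u) m) (rm m (b :: u))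
  - \sum_(0 <= k < (size u).+1) (-1) ^+ k * F (nth 0%N (b :: u) k) a (rm k (b :: u))
  + dsum (b :: u) (fun x y v => F x y (a :: v)).
Proof.
rewrite /dsum /= big_nat_recl // expr0 mul1r rm0 /= -addrA; congr (_ + _).
rewrite -sumrN -big_split; apply: eq_bigr => k _ /=.
rewrite rmS big_nat_recl // /= expr0 mul1r rm0 exprS mulN1r.
rewrite mulNr mulrDr opprD; congr (_ + _).
rewrite -mulrN -sumrN; congr (_ * _); apply: eq_bigr => m _.
by rewrite rmS exprS !mulN1r mulNr opprK.
Qed.

Lemma DL u F : dsum u F = - dsum u (fun x y v => F y x v).
Proof.
elim: u F => [|a u IH] F; first by rewrite /dsum !big_geq // oppr0.
case: u IH => [|b u] IH.
  by rewrite /dsum /= !big_nat1 !big_geq // !mulr0 oppr0.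
rewrite !dsum_cons (IH (fun x y v => F x y (a :: v))) /=.
rewrite !opprD opprK; ring.
Qed.

End DL.

Section TS.
Variable R : comRingType.

Definition tsum (t : seq nat) (P : nat -> nat -> nat -> seq nat -> R) :=
  \sum_(0 <= j < size t) (-1) ^+ j * \sum_(0 <= k < (size t).-1) (-1) ^+ k *
  \sum_(0 <= m < (size t).-2) (-1) ^+ m *
    P (nth 0%N t j) (nth 0%N (rm j t) k) (nth 0%N (rm k (rm j t)) m)
      (rm m (rm k (rm j t))).

Lemma tsum12 t P : tsum t P = - tsum t (fun x1 x2 x3 v => P x2 x1 x3 v).
Proof.
have := (@DL R t (fun x y v => \sum_(0 <= m < (size t).-2) (-1) ^+ m *
   P x y (nth 0%N v m) (rm m v))).
rewrite /dsum /tsum. move=> ->. done.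
Qed.

Lemma tsum23 t P : tsum t P = - tsum t (fun x1 x2 x3 v => P x1 x3 x2 v).
Proof.
rewrite /tsum -sumrN; apply: eq_big_nat => j /andP [_ hj].
rewrite -mulrN; congr (_ * _).
have := @DL R (rm j t) (fun y z v => P (nth 0%N t j) y z v).
by rewrite /dsum size_rm // => ->.
Qed.

Lemma tsumB t P Q : tsum t (fun x1 x2 x3 v => P x1 x2 x3 v - Q x1 x2 x3 v)
  = tsum t P - tsum t Q.
Proof.
rewrite /tsum -sumrB; apply: eq_bigr => j _; rewrite -mulrBr -sumrB.
congr (_ * _); apply: eq_bigr => k _; rewrite -mulrBr -sumrB.
congr (_ * _); apply: eq_bigr => m _; by rewrite mulrBr.
Qed.

Lemma tsum_cyc t P : tsum t (fun x1 x2 x3 v => P x3 x1 x2 v) = tsum t P.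
Proof. by rewrite tsum23 tsum12 opprK. Qed.

Lemma tsum_ext t P Q : (forall x1 x2 x3 v, P x1 x2 x3 v = Q x1 x2 x3 v) ->
  tsum t P = tsum t Q.
Proof.
move=> e; rewrite /tsum; apply: eq_bigr => j _; congr (_ * _).
apply: eq_bigr => k _; congr (_ * _); apply: eq_bigr => m _; by rewrite e.
Qed.

End TS.

Lemma dsum_rm (R : comRingType) j t F : (j < size t)%N -> @dsum R (rm j t) F =
  \sum_(0 <= k < (size t).-1) (-1) ^+ k * \sum_(0 <= m < (size t).-2) (-1) ^+ m *
   F (nth 0%N (rm j t) k) (nth 0%N (rm k (rm j t)) m) (rm m (rm k (rm j t))).
Proof. by move=> hj; rewrite /dsum size_rm. Qed.

Section Rank2.
Variables (R : comRingType) (g : nat -> nat -> R) (al be : nat -> R).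

Definition hh x y := al x * be y - al y * be x.
Definition Dc u := dsum u (fun x y v => hh x y * pfaffian g v).

Lemma rank2 w t : 3%:R * \sum_(0 <= j < size t) (-1) ^+ j * (hh w (nth 0%N t j) * Dc (rm j t)) = 0.
Proof.
pose Phi := fun x1 x2 x3 v => hh w x1 * (hh x2 x3 * pfaffian g v).
have -> : \sum_(0 <= j < size t) (-1) ^+ j * (hh w (nth 0%N t j) * Dc (rm j t)) = tsum t Phi.
  apply: eq_big_nat => j /andP [_ hj]; congr (_ * _).
  rewrite /Dc dsum_rm // mulr_sumr; apply: eq_bigr => k _.
  rewrite !mulr_sumr; apply: eq_bigr => m _; rewrite /Phi; ring.
have e1 := tsum_cyc t Phi.
have e2 : tsum t (fun x1 x2 x3 v => Phi x3 x1 x2 v) =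
    tsum t (fun x1 x2 x3 v => Phi x2 x1 x3 v - Phi x1 x2 x3 v).
  apply: tsum_ext => x1 x2 x3 v; rewrite /Phi /hh; ring.
have e3 := tsum12 t Phi.
rewrite tsumB e1 in e2.
set S := tsum t (fun x1 x2 x3 v => Phi x2 x1 x3 v) in e2 e3.
have eS : S = - tsum t Phi by rewrite e3 opprK.
rewrite eS in e2.
have -> : (3%:R : R) * tsum t Phi = tsum t Phi - (- tsum t Phi - tsum t Phi) by ring.
by rewrite -e2 subrr.
Qed.

Lemma Dc_cons a u : Dc (a :: u) =
  2%:R * \sum_(0 <= j < size u) (-1) ^+ j * (hh a (nth 0%N u j) * pfaffian g (rm j u))
  + \sum_(0 <= j < size u) (-1) ^+ j * (g a (nth 0%N u j) * Dc (rm j u)).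
Proof.
case: u => [|b u].
  by rewrite /Dc /dsum /= big_nat1 !big_geq // mulr0 mulr0 add0r.
rewrite /Dc dsum_cons.
set u' := b :: u.
have -> : \sum_(0 <= k < (size u).+1) (-1) ^+ k * (hh (nth 0%N u' k) a * pfaffian g (rm k u'))
   = - \sum_(0 <= k < (size u).+1) (-1) ^+ k * (hh a (nth 0%N u' k) * pfaffian g (rm k u')).
  rewrite -sumrN; apply: eq_bigr => k _; rewrite /hh; ring.
rewrite opprK -mulr2n mulr_natl; congr (_ + _).
pose Phi' := fun x1 x2 x3 v => g a x1 * (hh x2 x3 * pfaffian g v).
transitivity (tsum u' (fun x1 x2 x3 v => Phi' x3 x1 x2 v)).
  rewrite /dsum /tsum; apply: eq_big_nat => k /andP [_ hk]; congr (_ * _).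
  apply: eq_big_nat => m /andP [_ hm]; congr (_ * _).
  rewrite pfE mulr_sumr size_rm; last by rewrite size_rm.
  rewrite size_rm //; apply: eq_bigr => i _; rewrite /Phi'; ring.
rewrite (tsum_cyc u' Phi'); apply: eq_big_nat => j /andP [_ hj]; congr (_ * _).
rewrite dsum_rm // mulr_sumr; apply: eq_bigr => k _.
rewrite !mulr_sumr; apply: eq_bigr => m _; rewrite /Phi'; ring.
Qed.

End Rank2.

Definition gtr : rel nat := fun a b => (b < a)%N.
Lemma gtr_trans : transitive gtr.
Proof. move=> x y z h1 h2; rewrite /gtr in h1 h2 *; exact: ltn_trans h2 h1. Qed.

Lemma rm_subseq j (u : seq nat) : subseq (rm j u) u.
Proof.
rewrite -{2}(cat_take_drop j u) /rm; apply: cat_subseq => //.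
case: (drop j u) (drop_drop u 1 j) => [|c v]; rewrite add1n => <- //.
by rewrite [drop 1 _]/= drop0 subseq_cons.
Qed.

Lemma sorted_rm j u : sorted gtr u -> sorted gtr (rm j u).
Proof. by apply: subseq_sorted (rm_subseq j u); exact: gtr_trans. Qed.

Lemma sorted_head a u j : sorted gtr (a :: u) -> (j < size u)%N -> (nth 0%N u j < a)%N.
Proof.
move=> /= hp hj; have /all_nthP := order_path_min gtr_trans hp.
by move=> /(_ 0%N j hj).
Qed.

Section L3.
Variables (R : idomainType) (s : {rmorphism R -> R}) (y : R) (f : nat -> nat -> R)
  (al be : nat -> R).
Hypothesis h2 : (2%:R : R) != 0.
Hypothesis h3 : (3%:R : R) != 0.
Hypothesis hf : forall a b, (b < a)%N -> 2%:R * (f a b - s (f a b)) = y * hh al be a b.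

Lemma L3 u : sorted gtr u ->
  4%:R * (pfaffian f u - s (pfaffian f u)) = y * Dc (fun a b => s (f a b)) al be u.
Proof.
move: {2}(size u) (leqnn (size u)) => N; elim: N u => [|N IH] [|a u] //= hN hs;
  try by rewrite rmorph1 subrr mulr0 /Dc /dsum big_geq ?mulr0.
rewrite pf_rmorph !pfE Dc_cons.
set g := fun a b => s (f a b).
have key j : (j < size u)%N ->
   8%:R * (f a (nth 0%N u j) * pfaffian f (rm j u) - g a (nth 0%N u j) * pfaffian g (rm j u))
   = 2%:R * y * (2%:R * (hh al be a (nth 0%N u j) * pfaffian g (rm j u))
                 + g a (nth 0%N u j) * Dc g al be (rm j u))
     + y ^+ 2 * (hh al be a (nth 0%N u j) * Dc g al be (rm j u)).
  move=> hj.
  have E1 := hf (sorted_head hs hj).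
  have E2 : 4%:R * (pfaffian f (rm j u) - pfaffian g (rm j u)) = y * Dc g al be (rm j u).
    rewrite -pf_rmorph; apply: IH; last exact: sorted_rm (path_sorted hs).
    by rewrite size_rm //; lia.
  apply/eqP; rewrite -subr_eq0; apply/eqP.
  set F := f a (nth 0%N u j); set G := g a (nth 0%N u j); set H := hh al be a (nth 0%N u j).
  set X := pfaffian f (rm j u); set Y := pfaffian g (rm j u); set Z := Dc g al be (rm j u).
  rewrite -/F -/X in E1 E2.
  have -> : 8%:R * (F * X - G * Y) - (2%:R * y * (2%:R * (H * Y) + G * Z) + y ^+ 2 * (H * Z))
     = (2%:R * (F - G) - y * H) * (4%:R * X) + (2%:R * G + y * H) * (4%:R * (X - Y) - y * Z).
    rewrite /G /g; ring.
  by rewrite E1 E2 !subrr !mulr0 mul0r add0r.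
have r2 := rank2 g al be a u.
have r2' : \sum_(0 <= j < size u) (-1) ^+ j * (hh al be a (nth 0%N u j) * Dc g al be (rm j u)) = 0.
  by move: r2 => /eqP; rewrite mulf_eq0 (negbTE h3) /= => /eqP.
apply: (mulfI h2).
transitivity (\sum_(0 <= j < size u) (-1) ^+ j *
   (8%:R * (f a (nth 0%N u j) * pfaffian f (rm j u) - g a (nth 0%N u j) * pfaffian g (rm j u)))).
  rewrite -sumrB !mulr_sumr; apply: eq_bigr => j _; ring.
rewrite (eq_big_nat _ _ (fun j hj => congr1 (fun t => (-1) ^+ j * t) (key j (proj2 (andP hj))))).
rewrite (eq_bigr (fun j => (-1) ^+ j * (2%:R * y * (2%:R * (hh al be a (nth 0%N u j) * pfaffian g (rm j u))
                 + g a (nth 0%N u j) * Dc g al be (rm j u))) + y ^+ 2 * ((-1) ^+ j *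
     (hh al be a (nth 0%N u j) * Dc g al be (rm j u))))); last by move=> j _; ring.
rewrite big_split /= -mulr_sumr r2' mulr0 addr0.
rewrite [2%:R * \sum_(_ <= _ < _) _]mulr_sumr -big_split !mulr_sumr /=.
by apply: eq_bigr => j _; rewrite /g; ring.
Qed.

End L3.

Set Implicit Arguments. Unset Strict Implicit.

Lemma coef_quad (R : comNzRingType) (Q : {poly R}) (z y : R) k :
  (Q * (z%:P * 'X^2 + y%:P * 'X + 1))`_k.+2 = Q`_k.+2 + y * Q`_k.+1 + z * Q`_k.
Proof.
rewrite !mulrDr mulr1 !coefD [Q * (z%:P * _)]mulrCA [Q * (y%:P * _)]mulrCA !coefCM.
rewrite coefMX coefMXn /= subn2 /=.
ring.
Qed.

Lemma map_prod_fix (R : comNzRingType) (f : {rmorphism R -> R}) m (P : pred 'I_m) (c : 'I_m -> R) :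
  (forall i, P i -> f (c i) = c i) ->
  map_poly f (\prod_(i | P i) ((c i)%:P * 'X + 1)) = \prod_(i | P i) ((c i)%:P * 'X + 1).
Proof.
move=> hc; rewrite rmorph_prod; apply: eq_bigr => i hi.
rewrite rmorphD rmorphM rmorph1 /= map_polyC map_polyX.
by congr (_ * _ + _); congr (_ %:P); apply: hc.
Qed.

Lemma coef_fix (R : comNzRingType) (f : {rmorphism R -> R}) (p : {poly R}) j :
  map_poly f p = p -> f ((p * 'X^2)`_j) = (p * 'X^2)`_j.
Proof. by move=> hp; rewrite -coef_map rmorphM /= map_polyXn hp. Qed.

Lemma telesc (R : comNzRingType) (phi : nat -> R) m :
  \sum_(0 <= k < m) (-1) ^+ k.+1 * (phi k + phi k.+1) = (-1) ^+ m * phi m - phi 0%N.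
Proof.
elim: m => [|m IH]; first by rewrite big_geq // expr0 mul1r subrr.
rewrite big_nat_recr //= IH !exprS; ring.
Qed.

Lemma rearr (R : comNzRingType) (pa pb s pab qa qb t qab c : R) :
  2%:R * (pa * pb + 2%:R * s + c * pab - (qa * qb + 2%:R * t + c * qab)) =
  2%:R * (pa * pb - qa * qb) + 2%:R * (2%:R * (s - t)) + c * (2%:R * (pab - qab)).
Proof. ring. Qed.

Section Conc.
Variable n : nat.
Hypothesis hn : (2 < n)%N.

Definition i0 : 'I_n := Ordinal (ltn_trans (isT : (0 < 2)%N) hn).
Definition i1 : 'I_n := Ordinal (ltn_trans (isT : (1 < 2)%N) hn).

Definition sig : {rmorphism {mpoly rat[n]} -> {mpoly rat[n]}} := comp_mpoly (sbox_subst n).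

Lemma sboxE p : sbox p = sig p.
Proof. by []. Qed.

Lemma sigXc (i : 'I_n) : 'X_i \mPo sbox_subst n =
  if val i == 0%N then - 'X_i1 else if val i == 1%N then - 'X_i0 else 'X_i.
Proof.
rewrite /sig /= comp_mpolyXU /sbox_subst -tnth_nth tnth_mktuple.
have h1 : (1 < n)%N by apply: ltn_trans hn.
have h0 : (0 < n)%N by apply: ltn_trans hn.
case: ifP => [_|_]; first by congr (- 'X_ _); apply: val_inj; rewrite val_insubd /= h1.
case: ifP => // _; congr (- 'X_ _); apply: val_inj; rewrite val_insubd /= h0.
by [].
Qed.

Lemma sigX (i : 'I_n) : sig 'X_i =
  if val i == 0%N then - 'X_i1 else if val i == 1%N then - 'X_i0 else 'X_i.
Proof. exact: sigXc. Qed.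

Definition yy : {mpoly rat[n]} := 'X_i0 + 'X_i1.
Definition zz : {mpoly rat[n]} := 'X_i0 * 'X_i1.

Lemma x12E : x12 n = yy.
Proof.
rewrite /x12 (bigD1 i0) //= (bigD1 i1) //= big_pred0 ?addr0 //.
by move=> i; rewrite -!val_eqE /=; case: i => [[|[|k]]] //=.
Qed.

Lemma sig_y : sig yy = - yy.
Proof. by rewrite /yy rmorphD !sigX /= opprD addrC. Qed.

Lemma sig_z : sig zz = zz.
Proof. by rewrite /zz rmorphM !sigX /= mulrNN mulrC. Qed.


Lemma gen_mesym k : (\prod_(i < n) (('X_i : {mpoly rat[n]})%:P * 'X + 1))`_k = mesym n rat k.
Proof.
rewrite bigA_distr coef_sum /mesym (big_mkcond (fun h : {set 'I_n} => #|h| == k)).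
apply: eq_bigr => J _.
rewrite -big_mkcond /= big_split /= prodr_const -rmorph_prod coefCM coefXn.
by rewrite eq_sym; case: eqP => _; rewrite ?mulr1 ?mulr0.
Qed.


Definition Gp : {poly {mpoly rat[n]}} := \prod_(i < n | (2 <= i)%N) (('X_i)%:P * 'X + 1).
Definition Ee j := (Gp * 'X^2)`_j.

Lemma G_split : \prod_(i < n) (('X_i : {mpoly rat[n]})%:P * 'X + 1)
  = (zz%:P * 'X^2 + yy%:P * 'X + 1) * Gp.
Proof.
rewrite (bigD1 i0) //= (bigD1 i1) //= mulrA; congr (_ * _).
  rewrite /zz /yy !polyCM polyCD; ring.
apply: eq_bigl => i; rewrite -!val_eqE /=; case: i => [[|[|k]]] //=.
Qed.

Lemma Ee0 : Ee 0 = 0. Proof. by rewrite /Ee coefMXn. Qed.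
Lemma Ee1 : Ee 1 = 0. Proof. by rewrite /Ee coefMXn. Qed.
Lemma Ee2 : Ee 2 = 1.
Proof.
rewrite /Ee coefMXn /= -horner_coef0 /Gp horner_prod big1 // => i _.
by rewrite hornerD hornerMX mulr0 add0r -[1]/(1%:P) hornerC.
Qed.

Lemma mesym_Ee k : mesym n rat k = Ee k.+2 + yy * Ee k.+1 + zz * Ee k.
Proof.
rewrite -gen_mesym G_split.
have -> : (((zz%:P * 'X^2 + yy%:P * 'X + 1) * Gp)`_k) =
   (((zz%:P * 'X^2 + yy%:P * 'X + 1) * Gp) * 'X^2)`_k.+2.
  by rewrite coefMXn (_ : (k.+2 < 2)%N = false) // !subSS subn0.
have -> : (zz%:P * 'X^2 + yy%:P * 'X + 1) * Gp * 'X^2 =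
  (Gp * 'X^2) * (zz%:P * 'X^2 + yy%:P * 'X + 1) by ring.
exact: coef_quad.
Qed.

Lemma sig_Gp : map_poly sig Gp = Gp.
Proof.
apply: map_prod_fix => i hi.
by rewrite sigX; case: i hi => [[|[|k]]].
Qed.

Lemma sig_Ee j : sig (Ee j) = Ee j.
Proof. exact: coef_fix sig_Gp. Qed.

Definition AA i := Ee i.+2 + zz * Ee i.
Definition BB i := Ee i.+1.

Lemma two_ne0 : (2%:R : {mpoly rat[n]}) != 0.
Proof.
rewrite -(rmorph_nat (@mpolyC n rat)) mpolyC_eq0 /=.
by [].
Qed.

Lemma P2 i : (0 < i)%N -> 2%:R * Pt1 n i = AA i + yy * BB i.
Proof.
case: i => // i _; rewrite /Pt1 /= mulr_natl scalerMnl.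
have -> : ((2%:R^-1 : rat) *+ 2) = 1.
 by apply/eqP.
by rewrite scale1r mesym_Ee /AA /BB; ring.
Qed.

Lemma Ps2 i : (0 < i)%N -> 2%:R * sig (Pt1 n i) = AA i - yy * BB i.
Proof.
move=> hi; rewrite -(rmorph_nat sig) -rmorphM P2 // rmorphD rmorphM /AA /BB.
by rewrite rmorphD rmorphM sig_y sig_z !sig_Ee; ring.
Qed.

Lemma PP i j : (0 < i)%N -> (0 < j)%N ->
  2%:R * (Pt1 n i * Pt1 n j - sig (Pt1 n i) * sig (Pt1 n j)) = yy * (AA i * BB j + BB i * AA j).
Proof.
move=> hi hj; apply: (mulfI two_ne0).
have -> : 2%:R * (2%:R * (Pt1 n i * Pt1 n j - sig (Pt1 n i) * sig (Pt1 n j))) =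
  (2%:R * Pt1 n i) * (2%:R * Pt1 n j) - (2%:R * sig (Pt1 n i)) * (2%:R * sig (Pt1 n j)) by ring.
rewrite P2 // P2 // Ps2 // Ps2 //; ring.
Qed.

Lemma P1d i : (0 < i)%N -> 2%:R * (Pt1 n i - sig (Pt1 n i)) = 2%:R * yy * BB i.
Proof.
move=> hi; have -> : 2%:R * (Pt1 n i - sig (Pt1 n i)) = 2%:R * Pt1 n i - 2%:R * sig (Pt1 n i) by ring.
rewrite P2 // Ps2 //; ring.
Qed.

Definition al i := Ee i.+1.
Definition be i := if i == 0%N then 4%:R else Ee i.+2 - zz * Ee i.

Lemma pair_b0 a : (0 < a)%N ->
  2%:R * (Pt2 n a 0 - sig (Pt2 n a 0)) = yy * hh al be a 0.
Proof.
move=> ha; rewrite /Pt2 big_geq // mulr0 addr0 expr0 mul1r addn0.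
rewrite rmorphD rmorphM.
have -> : Pt1 n 0 = 1 by [].
rewrite rmorph1 !mulr1.
have -> : 2%:R * (Pt1 n a + Pt1 n a - (sig (Pt1 n a) + sig (Pt1 n a))) =
   2%:R * (2%:R * (Pt1 n a - sig (Pt1 n a))) by ring.
rewrite P1d // /hh /al /be /BB /= Ee1; ring.
Qed.

Lemma pair_bS a b : (b.+1 < a)%N ->
  2%:R * (Pt2 n a b.+1 - sig (Pt2 n a b.+1)) = yy * hh al be a b.+1.
Proof.
move=> hab.
pose phi j := Ee (a + j).+2 * Ee (b - j).+2 + zz * (Ee (a + j).+1 * Ee (b - j).+1).
rewrite /Pt2; set S := \sum_(1 <= k < b.+1) _.
have eS : 2%:R * (S - sig S) = yy * ((-1) ^+ b * phi b - phi 0%N).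
  rewrite -telesc /S rmorph_sum -sumrB !mulr_sumr big_add1.
  apply: eq_big_nat => k /andP [_ hk].
  rewrite !rmorphM rmorph_sign !subSS.
  have -> : 2%:R * ((-1) ^+ k.+1 * Pt1 n (a + k.+1) * Pt1 n (b - k) -
      (-1) ^+ k.+1 * sig (Pt1 n (a + k.+1)) * sig (Pt1 n (b - k))) =
      (-1) ^+ k.+1 * (2%:R * (Pt1 n (a + k.+1) * Pt1 n (b - k) -
      sig (Pt1 n (a + k.+1)) * sig (Pt1 n (b - k)))) by ring.
  rewrite PP; [|lia|lia].
  rewrite /phi /AA /BB !addnS.
  have -> : (b - k.+1).+2 = (b - k).+1 by lia.
  have -> : (b - k.+1).+1 = (b - k)%N by lia.
  move: (Ee) (zz) (yy) => E z y; ring.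
rewrite !rmorphD !rmorphM rmorph_nat rmorph_sign rearr.
rewrite eS PP; [|lia|lia].
rewrite P1d; last lia.
rewrite /phi subnn addn0 subn0 Ee2 Ee1 /hh /al /be /AA /BB.
clear phi eS S; case: a hab => [|a] hab //=.
rewrite !addnS !addSn.
move: (Ee) (zz) (yy) => E z y; rewrite !exprS; ring.
Qed.

End Conc.

Set Implicit Arguments. Unset Strict Implicit.

Section Fin.
Variable n : nat.
Hypothesis hn : (2 < n)%N.

Lemma pair_all a b : (b < a)%N ->
  2%:R * (Pt2 n a b - sig n (Pt2 n a b)) = yy hn * hh (al n) (be hn) a b.
Proof.
case: b => [|b] hab; first exact: pair_b0.
exact: pair_bS.
Qed.

Lemma yy_ne0 : yy hn != 0.
Proof.
apply/negP => /eqP h.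
have := congr1 (meval (fun _ => (1 : rat))) h.
rewrite /yy mevalD !mevalXU meval0 => /eqP.
by [].
Qed.

Lemma natr_ne0 c : (0 < c)%N -> (c%:R : {mpoly rat[n]}) != 0.
Proof.
move=> hc; rewrite -(rmorph_nat (@mpolyC n rat)) mpolyC_eq0 pnatr_eq0.
by rewrite -lt0n.
Qed.

Lemma dbox_char c p q : (0 < c)%N ->
  c%:R * (p - sbox p) = x12 n * q -> c%:R * dbox p = q.
Proof.
move=> hc hpq.
pose g := (c%:R^-1 : rat) *: q.
have cg : c%:R * g = q.
  rewrite /g -(rmorph_nat (@mpolyC n rat)) mul_mpolyC scalerA divff ?scale1r //.
  by rewrite pnatr_eq0 -lt0n.
have hg : x12 n * g = p - sbox p.
  apply: (mulfI (natr_ne0 hc)); rewrite hpq -cg; ring.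
have := epsilon_spec (inhabits 0) (fun g => x12 n * g = p - sbox p) (ex_intro _ g hg).
rewrite -/(dbox p) -hg => /(mulfI _) -> //; last by rewrite (x12E hn) yy_ne0.
Qed.

Lemma core t w : sorted gtr t -> all (fun x => w < x)%N t ->
  \sum_(0 <= j < size t) (-1) ^+ j * dbox (Pt2 n (nth 0%N t j) w)
      * dbox (pfaffian (Pt2 n) (rm j t)) = 0.
Proof.
move=> st aw.
have h8 : (0 < 8)%N by [].
apply: (mulfI (natr_ne0 h8)); rewrite mulr0 mulr_sumr.
pose g := fun a b => sig n (Pt2 n a b).
transitivity (\sum_(0 <= j < size t) (-1) ^+ j *
   (hh (al n) (be hn) (nth 0%N t j) w * Dc g (al n) (be hn) (rm j t))).
  apply: eq_big_nat => j /andP [_ hj].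
  have e1 : 2%:R * dbox (Pt2 n (nth 0%N t j) w) = hh (al n) (be hn) (nth 0%N t j) w.
    apply: dbox_char => //; rewrite sboxE (x12E hn); apply: pair_all.
    by move/all_nthP: aw => /(_ 0%N j hj).
  have e2 : 4%:R * dbox (pfaffian (Pt2 n) (rm j t)) = Dc g (al n) (be hn) (rm j t).
    apply: dbox_char => //; rewrite sboxE (x12E hn).
    apply: (L3 (s := sig n)) => //.
    - exact: natr_ne0.
    - exact: natr_ne0.
    - exact: pair_all.
    - exact: sorted_rm.
  rewrite -e1 -e2; ring.
have r2 : \sum_(0 <= j < size t) (-1) ^+ j *
   (hh (al n) (be hn) w (nth 0%N t j) * Dc g (al n) (be hn) (rm j t)) = 0 :> {mpoly rat[n]}.
  move: (rank2 g (al n) (be hn) w t) => /eqP.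
  by rewrite mulf_eq0 (negbTE (natr_ne0 (isT : (0 < 3)%N))) /= => /eqP.
rewrite -[RHS]oppr0 -[in RHS]r2 -sumrN; apply: eq_bigr => j _; rewrite /hh; ring.
Qed.

End Fin.

Unset Implicit Arguments.

Lemma evenup_cases m : (odd m /\ evenup m = m.+1) \/ (~~ odd m /\ evenup m = m).
Proof.
rewrite /evenup; rewrite -[in X in X \/ _](odd_double_half m) -[in X in _ \/ X](odd_double_half m).
case: (odd m) => /=; [left|right]; split => //; rewrite -!muln2; lia.
Qed.

Lemma pad_even u : ~~ odd (size u) -> pad u = u.
Proof.
move=> h; rewrite /pad; case: (evenup_cases (size u)) => [[h1 _]|[_ ->]].
  by rewrite h1 in h.
by rewrite subnn cats0.
Qed.

Lemma filter_rm (t : seq nat) j : uniq t -> (j < size t)%N ->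
  [seq x <- t | x != nth 0%N t j] = rm j t.
Proof.
elim: t j => [|a t IH] [|j] //= /andP [na ut] hj.
  rewrite eqxx rm0; apply/all_filterP/allP => x xt.
  by apply/eqP => e; move: na; rewrite -e xt.
rewrite rmS IH //; case: eqP => // e.
by move: na; rewrite e mem_nth.
Qed.

Lemma gtr_irr : irreflexive gtr.
Proof. by move=> x; rewrite /gtr ltnn. Qed.

Theorem theorem2 (n : nat) (lam : seq nat) :
  (3 <= n)%N -> strict_part_le n lam -> (3 <= size lam)%N ->
  let r := evenup (size lam) in
  let l := fun j : nat => nth 0%N lam j.-1 in
  \sum_(1 <= j < r)
     (-1) ^+ j.-1 * dbox (Pt2 n (l j) (l r))
       * dbox (Ptilde n [seq x <- lam | (x != l j) && (x != l r)])
  = 0 :> {mpoly rat[n]}.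
Proof.
move=> hn /andP [slam alam] hl r l.
have sl : sorted gtr lam by [].
have ul : uniq lam := sorted_uniq gtr_trans gtr_irr sl.
pose m := size lam.
pose t := take r.-1 lam.
pose w := l r.
have hr : (r.-1 <= m)%N by rewrite /r; case: (evenup_cases m) => [[_ ->]|[_ ->]]; lia.
have st : size t = r.-1 by rewrite size_take_min; apply/minn_idPl.
have rev : ~~ odd r.
  by rewrite /r /evenup oddM andFb.
have hsort : sorted gtr t.
  exact: (subseq_sorted gtr_trans (take_subseq lam r.-1) sl).
have hpos : forall i, (i < m)%N -> (0 < nth 0%N lam i)%N.
  move=> i hi; move/(all_nthP 0%N): alam => /(_ i hi) /andP [] //.
have hdec : forall i k, (i < k)%N -> (k < m)%N -> (nth 0%N lam k < nth 0%N lam i)%N.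
  move=> i k hik hk; have := sorted_ltn_nth gtr_trans 0%N sl.
  by move=> /(_ i k); apply => //; rewrite inE //; lia.
have hw : all (fun x => w < x)%N t.
  apply/(all_nthP 0%N) => i; rewrite st => hi; rewrite nth_take //.
  rewrite /w /l; case: (evenup_cases m) => [[_ er]|[_ er]];
    rewrite /r -/m er /= in hi *.
    by rewrite nth_default ?hpos //; lia.
  by apply: hdec; lia.
have ut : uniq t by rewrite take_uniq.
have hf : forall j, (j < r.-1)%N ->
    [seq x <- lam | (x != l j.+1) && (x != l r)] = rm j t.
  move=> j hj; rewrite /l /= -(nth_take 0%N hj) -/t -(filter_rm t j ut); last by rewrite st.
  case: (evenup_cases m) => [[_ er]|[_ er]]; rewrite /r -/m er /= in hj *.
    rewrite /t /r -/m er /= take_oversize //.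
    apply: eq_in_filter => x xl; rewrite (nth_default 0%N (leqnn m)).
    suff : x != 0%N by move=> ->; rewrite andbT.
    by move/allP: alam => /(_ x xl) /andP [] ; rewrite lt0n.
  have el : lam = t ++ [:: nth 0%N lam m.-1].
    rewrite /t /r -/m er -{1}(cat_take_drop m.-1 lam) (drop_nth 0%N); last lia.
    by rewrite (_ : m.-1.+1 = m) ?drop_oversize //; lia.
  rewrite [X in filter _ X]el filter_cat /= eqxx andbF cats0.
  apply: eq_in_filter => x xt.
  have : (w < x)%N by move/allP: hw => /(_ x xt).
  rewrite /w /l /r -/m er => hx.
  suff : x != nth 0%N lam m.-1 by move=> ->; rewrite andbT.
  by apply/eqP => e; rewrite e ltnn in hx.
rewrite big_add1 -[RHS](core hn hsort hw) st.
apply: eq_big_nat => j /andP [_ hj].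
rewrite /= hf // /Ptilde pad_even; last first.
  rewrite size_rm st //; have e : r = r.-2.+2 by lia.
  by move: rev; rewrite {1}e /= negbK.
by rewrite /l /= nth_take.
Qed.
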